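(* Let $T$ be a tree with $|V(T)|$ even, and suppose the $3$-coloring game is being played on $T$ (starting from the uncolored tree, Alice moving first). If at some point of the game the current partial coloring contains an uncolored path $P_4$ that is surrounded by a color $\alpha$, i.e. each vertex of the $P_4$ has a neighbor colored $\alpha$ and no neighbor colored with a color other than $\alpha$, then Bob can win the $3$-coloring game on $T$.
   Context: The $3$-coloring game on a graph: Alice and Bob alternate turns, Alice first, each coloring an uncolored vertex with one of $3$ colors not used on any of its neighbors; Bob wins if at some point an uncolored vertex has no such color available; Alice wins if all vertices become colored. *)

(* Defs.v *)
From mathcomp Require Import all_boot.
Set Implicit Arguments. Unset Strict Implicit. Unset Printing Implicit Defensive.

Definition simple_graph (T : finType) (e : rel T) : Prop :=
  symmetric e /\ irreflexive e.

(* A tree: nonempty, connected, with |E| = |V| - 1.  Edges are counted as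
   ordered pairs, so the ordered-pair count is 2(|V|-1). *)
Definition is_tree (T : finType) (e : rel T) : Prop :=
  [/\ simple_graph e, 0 < #|T|,
      (forall x y : T, connect e x y) &
      #|[set p : T * T | e p.1 p.2]| = 2 * (#|T|).-1].

(* Partial 3-colorings: None = uncolored. *)
Definition pcol (T : finType) := {ffun T -> option 'I_3}.

Definition available (T : finType) (e : rel T) (c : pcol T) (v : T) (k : 'I_3) :=
  forall u, e v u -> c u <> Some k.

Definition blocked (T : finType) (e : rel T) (c : pcol T) :=
  exists v, c v = None /\ forall k, ~ available e c v k.

Definition legal (T : finType) (e : rel T) (c : pcol T) (v : T) (k : 'I_3) :=
  c v = None /\ available e c v k.

Definition recolor (T : finType) (c : pcol T) (v : T) (k : 'I_3) : pcol T :=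
  [ffun u => if u == v then Some k else c u].

Definition ncolored (T : finType) (c : pcol T) := #|[set v | c v != None]|.

(* Alice moves first, players alternate: it is Alice's turn iff the number
   of colored vertices is even. *)
Definition alice_turn (T : finType) (c : pcol T) := ~~ odd (ncolored c).

Definition empty_col (T : finType) : pcol T := [ffun _ => None].

(* Positions reachable during the game, started from the uncolored graph
   (the game stops as soon as Bob has won). *)
Inductive reachable (T : finType) (e : rel T) : pcol T -> Prop :=
| reach0 : reachable e (empty_col T)
| reachS c v k : reachable e c -> ~ blocked e c -> legal e c v k ->
    reachable e (recolor c v k).

(* The game is finite, so the inductive (least fixed
   point) definition captures exactly the existence of a winning strategy. *)
Inductive bob_wins (T : finType) (e : rel T) : pcol T -> Prop :=
| bw_blocked c : blocked e c -> bob_wins e c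
| bw_alice c : alice_turn c -> ~ blocked e c -> (exists v, c v = None) ->
    (forall v k, legal e c v k -> bob_wins e (recolor c v k)) -> bob_wins e c
| bw_bob c v k : ~~ alice_turn c -> ~ blocked e c -> legal e c v k ->
    bob_wins e (recolor c v k) -> bob_wins e c.

Definition surrounded (T : finType) (e : rel T) (c : pcol T) (v : T) (alpha : 'I_3) :=
  (exists u, e v u /\ c u = Some alpha) /\
  (forall u beta, e v u -> c u = Some beta -> beta = alpha).

Definition has_surrounded_P4 (T : finType) (e : rel T) (c : pcol T) :=
  exists (a b x d : T) (alpha : 'I_3),
    [/\ uniq [:: a; b; x; d], e a b, e b x & e x d] /\
    (forall w, w \in [:: a; b; x; d] -> c w = None /\ surrounded e c w alpha).

(* Main.v *)
Require Import Defs.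
From mathcomp Require Import all_boot.
From Stdlib Require Import Classical.
From Stdlib Require Import Classical.
Set Implicit Arguments. Unset Strict Implicit. Unset Printing Implicit Defensive.
Section TreeS.
Variables (T : finType) (e : rel T).
Hypotheses (esym : symmetric e) (conn : forall x y : T, connect e x y)
  (ecard : #|[set p : T * T | e p.1 p.2]| = 2 * (#|T|).-1).
Variable r : T.

Definition Pd (v : T) (k : nat) := [exists t : k.-tuple T, path e r t && (last r t == v)].
Lemma exPd v : exists k, Pd v k.
Proof.
case/connectP: (conn r v) => p pp lv; exists (size p); apply/existsP.
by exists (in_tuple p); rewrite /= pp -lv eqxx.
Qed.
Definition dist v := ex_minn (exPd v).

Lemma par_ex v : v != r -> exists u, e v u && (dist u < dist v).
Proof.
move=> vr; rewrite /dist; case: (ex_minnP (exPd v)) => k /existsP [t /andP [pt /eqP lt]] _.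
move: pt lt; case: t => s /= /eqP <-; case/lastP: s => [|s y] /=.
  by move=> _ rv; move: vr; rewrite rv eqxx.
rewrite rcons_path last_rcons size_rcons => /andP [ps ey] yv; subst y.
exists (last r s); rewrite esym ey /=.
case: (ex_minnP (exPd (last r s))) => m _ /(_ (size s)) H; apply: leq_ltn_trans (H _) _ => //.
by apply/existsP; exists (in_tuple s); rewrite /= ps eqxx.
Qed.

Definition par v := odflt r [pick u | e v u && (dist u < dist v)].
Lemma par_spec v : v != r -> e v (par v) && (dist (par v) < dist v).
Proof.
move=> vr; rewrite /par; case: pickP => [u /= H|H] //.
by have [u Hu] := par_ex vr; rewrite H in Hu.
Qed.

Lemma edge_par s t : e s t -> (s != r /\ t = par s) \/ (t != r /\ s = par t).
Proof.
move=> est.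
set A := [set (v, par v) | v in [set~ r]].
set B := [set (par v, v) | v in [set~ r]].
set E := [set p : T * T | e p.1 p.2].
have cA : #|A| = #|T|.-1 by rewrite card_imset ?cardsC1 // => u v [].
have cB : #|B| = #|T|.-1 by rewrite card_imset ?cardsC1 // => u v [].
have dAB : A :&: B = set0.
  apply/setP => [[p q]]; rewrite !inE; apply/negP => /andP [/imsetP [v] + [-> ->]].
  move=> /[!inE] vr /imsetP [u] /[!inE] ur [h1 h2].
  have := par_spec vr; have := par_spec ur; rewrite -h1 -h2 => /andP [_ l1] /andP [_ l2].
  by have := ltn_trans l1 l2; rewrite ltnn.
have sub : A :|: B \subset E.
  apply/subsetP => [[p q]]; rewrite !inE => /orP [] /imsetP [v] /[!inE] vr [-> ->] /=.
    by case/andP: (par_spec vr).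
  by rewrite esym; case/andP: (par_spec vr).
have : E == A :|: B.
  rewrite eq_sym eqEcard sub /=.
  have := cardsUI A B; rewrite dAB cards0 addn0 cA cB ecard => ->.
  by rewrite mul2n -addnn.
move/eqP => EAB.
have : (s, t) \in E by rewrite inE.
rewrite EAB inE => /orP [] /imsetP [v] /[!inE] vr [-> ->]; [left|right]; by [].
Qed.

Lemma seq_max (f : T -> nat) (s : seq T) x0 :
  exists2 M, M \in x0 :: s & forall y, y \in x0 :: s -> f y <= f M.
Proof.
elim: s x0 => [|y s IH] x0.
  by exists x0 => [|z]; rewrite ?inE // => /eqP ->.
have [M HM Hmax] := IH y.
case: (leqP (f x0) (f M)) => h.
  exists M; first by rewrite inE HM orbT.
  by move=> z; rewrite inE => /orP [/eqP -> //|]; apply: Hmax.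
exists x0; first by rewrite inE eqxx.
move=> z; rewrite inE => /orP [/eqP -> //|/Hmax H]; exact: leq_trans H (ltnW h).
Qed.

Lemma no_cycle s : uniq s -> 2 < size s -> cycle e s -> False.
Proof.
case: s => [//|x0 s] us ss cs.
have [M HM Hmax] := seq_max dist s x0.
case: (rot_to HM) => i s' hr.
have us' : uniq (M :: s') by rewrite -hr rot_uniq.
have cs' : cycle e (M :: s') by rewrite -hr rot_cycle.
have ss' : 2 < size (M :: s') by rewrite -hr size_rot.
have mem' : forall y, y \in M :: s' -> dist y <= dist M.
  by move=> y; rewrite -hr mem_rot; apply: Hmax.
move: us' cs' ss' mem'; case: s' {hr} => [//|u1 s2] /=.
case: s2 => [//|z s2] /= /andP [] + /andP [u1n _] /andP [eMu1] pth _ mem'.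
rewrite !inE negb_or => /andP [Mu1 _].
have pthr := pth; rewrite -cats1 cat_path /= andbT in pthr.
case/andP: pthr => _ eLM.
set u2 := last z s2 in eLM.
have u2in : u2 \in z :: s2 by apply: mem_last.
have u12 : u1 != u2 by apply: contraNneq u1n => ->.
have key : forall u, u \in M :: u1 :: z :: s2 -> e M u -> u = par M.
  move=> u uin eMu; case: (edge_par eMu) => [[_ ->] //|[ur Mp]].
  have := par_spec ur; rewrite -Mp => /andP [_ lt].
  by have := mem' u uin; rewrite leqNgt lt.
have h1 : u1 = par M by apply: key => //; rewrite !inE eqxx orbT.
case/andP: eLM => _ eLM.
have h2 : u2 = par M.
  apply: key; last by rewrite esym.
  by rewrite (in_cons M) (in_cons u1) u2in !orbT.
by move: u12; rewrite h1 h2 eqxx.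
Qed.

End TreeS.
Lemma third (a b : 'I_3) : exists g : 'I_3, g != a /\ g != b.
Proof.
have : 0 < #|~: [set a; b]|.
  rewrite cardsCs setCK card_ord; have := cards2 a b; case: (a != b) => /= -> //.
case/card_gt0P => g; rewrite !inE negb_or => /andP [h1 h2]; by exists g.
Qed.

Lemma all3 (a b g k : 'I_3) : a != b -> a != g -> b != g -> [\/ k = a, k = b | k = g].
Proof.
move=> ab ag bg; case: (k =P a) => [|ka]; first by constructor 1.
case: (k =P b) => [|kb]; first by constructor 2.
case: (k =P g) => [|kg]; first by constructor 3.
have : uniq [:: k; a; b; g].
  by rewrite /= !inE !negb_or ab ag bg (introF eqP ka) (introF eqP kb) (introF eqP kg).
move/card_uniqP => /= h; have := max_card (mem [:: k; a; b; g]); rewrite h card_ord //.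
Qed.

Ltac solve_neq := rewrite /= ?inE ?negb_or ?andbT; repeat (apply/andP; split); try done; try (by rewrite eq_sym).
Ltac split_all := repeat match goal with H : is_true (_ && _) |- _ => case/andP: H => ? ? end.

Section Game.
Variables (T : finType) (e : rel T).
Hypotheses (esym : symmetric e) (eirr : irreflexive e).

Lemma recolorE (c : pcol T) v k u : recolor c v k u = if u == v then Some k else c u.
Proof. by rewrite /recolor ffunE. Qed.

Lemma keep (c : pcol T) v k u j : c u = Some j -> c v = None -> recolor c v k u = Some j.
Proof. by rewrite recolorE; case: eqP => [-> ->|]. Qed.

Lemma ncol_rec (c : pcol T) v k : c v = None -> ncolored (recolor c v k) = (ncolored c).+1.
Proof.
move=> cv; rewrite /ncolored.
have -> : [set u | recolor c v k u != None] = v |: [set u | c u != None].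
  by apply/setP => u; rewrite !inE recolorE; case: (u == v).
by rewrite cardsU1 inE cv /= add1n.
Qed.

Lemma alice_rec (c : pcol T) v k : c v = None -> alice_turn (recolor c v k) = ~~ alice_turn c.
Proof. by move=> cv; rewrite /alice_turn ncol_rec //= negbK. Qed.

Lemma ncol_un (c : pcol T) : ncolored c + #|[set u | c u == None]| = #|T|.
Proof.
rewrite /ncolored -(cardsC [set u | c u != None]); congr (_ + _).
by apply/eq_card => u; rewrite !inE negbK.
Qed.

Lemma ncol_lt (c : pcol T) v : c v = None -> ncolored c < #|T|.
Proof.
move=> cv; rewrite -(ncol_un c) -addn1 leq_add2l; apply/card_gt0P; exists v; by rewrite inE cv.
Qed.

Definition mes (c : pcol T) := #|T| - ncolored c.

Lemma mes_rec (c : pcol T) v k n : c v = None -> mes c <= n.+1 -> mes (recolor c v k) <= n.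
Proof.
move=> cv; rewrite /mes ncol_rec // subnS; by case: (#|T| - ncolored c).
Qed.

Lemma block2 (c : pcol T) p q j1 j2 j3 : ~~ alice_turn c -> c p = None -> c q = None ->
  p != q -> e p q ->
  (exists u, e p u /\ c u = Some j1) -> (exists u, e p u /\ c u = Some j2) ->
  j1 != j2 -> j1 != j3 -> j2 != j3 -> available e c q j3 -> bob_wins e c.
Proof.
move=> nat cp cq pq epq [u1 [e1 c1]] [u2 [e2 c2]] d12 d13 d23 av.
case: (classic (blocked e c)) => [bl|nbl]; first exact: bw_blocked.
apply: (@bw_bob _ _ _ q j3) => //; apply: bw_blocked; exists p; split.
  by rewrite recolorE (negbTE pq).
move=> k avk; case: (all3 k d12 d13 d23) => kj; subst k.
- by apply: (avk u1 e1); apply: keep.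
- by apply: (avk u2 e2); apply: keep.
- by apply: (avk q epq); rewrite recolorE eqxx.
Qed.

Lemma avail_base (c : pcol T) q alpha j : (forall u beta, e q u -> c u = Some beta -> beta = alpha) ->
  j != alpha -> available e c q j.
Proof. by move=> H ja u equ cu; move: ja; rewrite (H u j equ cu) eqxx. Qed.

Lemma avail_rec (c : pcol T) q j v k : available e c q j -> (e q v -> k != j) ->
  available e (recolor c v k) q j.
Proof.
move=> av H u equ; rewrite recolorE; case: eqP => [uv|_]; last exact: av.
by case=> kj; move: equ; rewrite uv => /H; rewrite kj eqxx.
Qed.

Definition sur (c : pcol T) alpha w := c w = None /\ surrounded e c w alpha.

Lemma sur_rec (c : pcol T) alpha w v k : sur c alpha w -> v != w ->
  (k = alpha \/ ~ e w v) -> c v = None -> sur (recolor c v k) alpha w.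
Proof.
move=> [cw [[u [ewu cu]] H]] vw kH cv; split; first by rewrite recolorE eq_sym (negbTE vw).
split; first by exists u; split => //; apply: keep.
move=> u' beta ewu'; rewrite recolorE; case: eqP => [uv [<-]|_]; last exact: H.
by case: kH => // /(_ _); rewrite -uv.
Qed.

Lemma unavail (c : pcol T) v j : ~ available e c v j -> exists u, e v u /\ c u = Some j.
Proof.
move=> na; apply: NNPP => ne; apply: na => u evu cu; apply: ne; by exists u.
Qed.



Lemma interior (c : pcol T) w q1 p q2 f alpha :
  ~~ alice_turn c -> uniq [:: w; q1; p; q2; f] ->
  e w p -> e q1 p -> e p q2 -> e q2 f ->
  sur c alpha q1 -> sur c alpha p -> sur c alpha q2 -> sur c alpha f ->
  c w = None -> (forall u beta, e w u -> c u = Some beta -> beta = alpha) ->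
  ~ e q1 q2 -> ~ e w f -> (forall v, v != p -> e v q1 -> e v q2 -> False) ->
  bob_wins e c.
Proof.
move=> nat U ewp eq1p epq2 eq2f S1 Sp S2 Sf cw Hw n12 nwf n4.
move: U; rewrite /= !inE !negb_or => U; split_all.
have [beta [ba _]] := third alpha alpha.
have [gam [ga gb]] := third alpha beta.
case: (classic (blocked e c)) => [bl|nbl]; first exact: bw_blocked.
case: (Sp) => cp [[up [epu cup]] Hp].
apply: (@bw_bob _ _ _ w beta) => //; first by split => //; apply: avail_base Hw ba.
set c2 := recolor c w beta.
have c2w : c2 w = Some beta by rewrite /c2 recolorE eqxx.
case: (classic (blocked e c2)) => [bl2|nbl2]; first exact: bw_blocked.
have pw : p != w by solve_neq.
apply: bw_alice => //; first by rewrite /c2 alice_rec.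
  by exists p; rewrite /c2 recolorE (negbTE pw).
move=> v k [c2v avk].
set c3 := recolor c2 v k.
have nat3 : ~~ alice_turn c3.
  by rewrite /c3 (alice_rec _ c2v) negbK /c2 (alice_rec _ cw).
have vw : v != w by apply/eqP => vw; move: c2v; rewrite vw c2w.
have k3 : forall z j, c z = Some j -> c3 z = Some j.
  by move=> z j cz; rewrite /c3; apply: keep => //; rewrite /c2; apply: keep.
have u3 : forall z, c z = None -> z != w -> z != v -> c3 z = None.
  by move=> z cz zw zv; rewrite /c3 /c2 !recolorE (negbTE zw) (negbTE zv).
have c3w : c3 w = Some beta by rewrite /c3; apply: keep.
case: (eqVneq v p) => [vp|vp].
  subst v.
  have ka : k != alpha.
    apply/eqP => ka; apply: (avk up epu); rewrite /c2 ka; apply: keep => //.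
  have kb : k != beta.
    apply/eqP => kb; apply: (avk w); first by rewrite esym.
    by rewrite c2w kb.
  case: S2 => cq2 [[u2 [eu2 cu2]] H2].
  case: Sf => cf [_ Hf].
  apply: (block2 (p:=q2) (q:=f) (j1:=alpha) (j2:=k) (j3:=beta)) => //.
  all: try (by apply: u3 => //; solve_neq).
  - by exists u2; split => //; apply: k3.
  - by exists p; split; [rewrite esym | rewrite /c3 recolorE eqxx].
  - by rewrite eq_sym.
  - by rewrite eq_sym.
  - apply: avail_rec; last by move=> _.
    apply: avail_rec; first exact: avail_base Hf ba.
    by move=> efw; exfalso; apply: nwf; rewrite esym.
have fin : forall Q, sur c alpha Q -> Q != w -> e p Q -> v != Q -> (e Q v -> k != gam) ->
    bob_wins e c3.
  move=> Q [cQ [_ HQ]] Qw epQ vQ H.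
  have pQ : p != Q by apply: contraTneq epQ => ->; rewrite eirr.
  apply: (block2 (p:=p) (q:=Q) (j1:=alpha) (j2:=beta) (j3:=gam)) => //.
  all: try (by apply: u3 => //; solve_neq).
  - by exists up; split => //; apply: k3.
  - by exists w; split; first by rewrite esym.
  - by rewrite eq_sym.
  - by rewrite eq_sym.
  - by rewrite eq_sym.
  - apply: avail_rec => //; apply: avail_rec; first exact: avail_base HQ ga.
    by move=> _; rewrite eq_sym.
case: (boolP ((v != q1) && (~~ e q1 v || (k != gam)))) => [/andP [vq1 h]|h].
  apply: (fin q1) => //; first by solve_neq.
    by rewrite esym.
  by move=> e1; move: h; rewrite e1.
move: h; rewrite negb_and negbK negb_or negbK => /orP [/eqP vq1|/andP [eq1v /eqP kg]].
  subst v; apply: (fin q2) => //; try solve_neq.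
  by move=> e21; exfalso; apply: n12; rewrite esym.
apply: (fin q2) => //; try solve_neq.
  by apply: contraTneq eq1v => ->; apply/negP.
by move=> e2v; exfalso; apply: (n4 v) => //; rewrite esym.
Qed.

Lemma endpoint (c : pcol T) w a b x d alpha :
  ~~ alice_turn c -> uniq [:: w; a; b; x; d] ->
  e w a -> e a b -> e b x -> e x d ->
  sur c alpha a -> sur c alpha b -> sur c alpha x -> sur c alpha d ->
  c w = None -> (forall u beta, e w u -> c u = Some beta -> beta = alpha) ->
  ~ e a d -> ~ e w d -> ~ e w x ->
  (forall v, v != a -> v != b -> v != x -> e v w -> e v d -> False) ->
  bob_wins e c.
Proof.
move=> nat U ewa eab ebx exd Sa Sb Sx Sd cw Hw nad nwd nwx n6.
move: U; rewrite /= !inE !negb_or => U; split_all.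
have [beta [ba _]] := third alpha alpha.
have [gam [ga gb]] := third alpha beta.
case: (classic (blocked e c)) => [bl|nbl]; first exact: bw_blocked.
case: (Sb) => cb [_ Hb].
case: (Sa) => ca [[ua [eua cua]] _].
case: (Sx) => cx [[ux [eux cux]] _].
case: (Sd) => cd [_ Hd].
apply: (@bw_bob _ _ _ b beta) => //; first by split => //; apply: avail_base Hb ba.
set c2 := recolor c b beta.
have c2b : c2 b = Some beta by rewrite /c2 recolorE eqxx.
case: (classic (blocked e c2)) => [bl2|nbl2]; first exact: bw_blocked.
have ab : a != b by solve_neq.
apply: bw_alice => //; first by rewrite /c2 alice_rec.
  by exists a; rewrite /c2 recolorE (negbTE ab).
move=> v k [c2v avk].
set c3 := recolor c2 v k.
have nat3 : ~~ alice_turn c3.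
  by rewrite /c3 (alice_rec _ c2v) negbK /c2 (alice_rec _ cb).
have vb : v != b by apply/eqP => vb; move: c2v; rewrite vb c2b.
have k3 : forall z j, c z = Some j -> c3 z = Some j.
  by move=> z j cz; rewrite /c3; apply: keep => //; rewrite /c2; apply: keep.
have u3 : forall z, c z = None -> z != b -> z != v -> c3 z = None.
  by move=> z cz zb zv; rewrite /c3 /c2 !recolorE (negbTE zb) (negbTE zv).
have c3b : c3 b = Some beta by rewrite /c3; apply: keep.
have finA : v != a -> v != w -> (e w v -> k != gam) -> bob_wins e c3.
  move=> va vw H.
  apply: (block2 (p:=a) (q:=w) (j1:=alpha) (j2:=beta) (j3:=gam)) => //.
  all: try (by apply: u3 => //; solve_neq).
  all: try (by solve_neq).
  - by rewrite esym.
  - by exists ua; split => //; apply: k3.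
  - by exists b.
  - apply: avail_rec => //; apply: avail_rec; first exact: avail_base Hw ga.
    by move=> _; rewrite eq_sym.
have finB : v != x -> v != d -> (e d v -> k != gam) -> bob_wins e c3.
  move=> vx vd H.
  apply: (block2 (p:=x) (q:=d) (j1:=alpha) (j2:=beta) (j3:=gam)) => //.
  all: try (by apply: u3 => //; solve_neq).
  all: try (by solve_neq).
  - by exists ux; split => //; apply: k3.
  - by exists b; split; first by rewrite esym.
  - apply: avail_rec => //; apply: avail_rec; first exact: avail_base Hd ga.
    by move=> _; rewrite eq_sym.
case: (eqVneq v a) => [va|va].
  subst v; apply: finB; try solve_neq.
  by move=> eda; exfalso; apply: nad; rewrite esym.
case: (eqVneq v w) => [vw|vw].
  subst v; apply: finB; try solve_neq.
  by move=> edw; exfalso; apply: nwd; rewrite esym.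
case: (boolP (e w v && (k == gam))) => [/andP [ewv /eqP kg]|h].
  apply: finB.
  - by apply/eqP => vx; apply: nwx; rewrite -vx.
  - by apply/eqP => vd; apply: nwd; rewrite -vd.
  - by move=> edv; exfalso; apply: (n6 v) => //; [apply/eqP => vx; apply: nwx; rewrite -vx | rewrite esym | rewrite esym].
apply: finA => // ewv; move: h; by rewrite ewv.
Qed.
End Game.

Section Main.
Variables (T : finType) (e : rel T).
Hypotheses (esym : symmetric e) (eirr : irreflexive e)
  (acyc : forall s, uniq s -> 2 < size s -> cycle e s -> False)
  (teven : ~~ odd #|T|).

Ltac solve_cyc := rewrite /= ?andbT; repeat (apply/andP; split); try done; try (by rewrite esym).

Definition H4 (c : pcol T) a b x d alpha :=
  [/\ uniq [:: a; b; x; d], e a b, e b x & e x d] /\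
  (forall w, w \in [:: a; b; x; d] -> c w = None /\ surrounded e c w alpha).

Lemma extra_unc (c : pcol T) a b x d alpha : ~~ alice_turn c -> H4 c a b x d alpha ->
  exists w, c w = None /\ w \notin [:: a; b; x; d].
Proof.
move=> nat [[U _ _ _] HS]; apply: NNPP => H.
have sub : [set u | c u == None] = [set u in [:: a; b; x; d]].
  apply/setP => u; rewrite !in_set; apply/idP/idP.
    move/eqP => cu; case: (boolP (u \in [:: a; b; x; d])) => // un.
    by exfalso; apply: H; exists u.
  by move/HS => [-> _].
have := ncol_un c; rewrite sub cardsE (card_uniqP U) /= => h.
move: teven nat; rewrite -h /alice_turn negbK oddD /=.
by case: (odd (ncolored c)).
Qed.

Lemma main n : forall (c : pcol T) a b x d alpha, mes c <= n -> H4 c a b x d alpha -> bob_wins e c.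
Proof.
elim: n => [|n IH] c a b x d alpha m [[U eab ebx exd] HS].
  have [ca _] := HS a (mem_head _ _).
  by move: m; rewrite /mes leqn0 subn_eq0 leqNgt (ncol_lt ca).
have P4i : forall z, z \in [:: a; b; x; d] -> sur e c alpha z by move=> z /HS.
have Sa : sur e c alpha a by apply: P4i; rewrite !inE eqxx.
have Sb : sur e c alpha b by apply: P4i; rewrite !inE eqxx /= ?orbT.
have Sx : sur e c alpha x by apply: P4i; rewrite !inE eqxx /= ?orbT.
have Sd : sur e c alpha d by apply: P4i; rewrite !inE eqxx /= ?orbT.
have U' := U; move: U'; rewrite /= !inE !negb_or => U'; split_all.
case: (classic (blocked e c)) => [bl|nbl]; first exact: bw_blocked.
case: (boolP (alice_turn c)) => atc.
  have [ca _] := Sa.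
  apply: bw_alice => //; first by exists a.
  move=> v k [cv avk].
  set c1 := recolor c v k.
  have nat1 : ~~ alice_turn c1 by rewrite /c1 alice_rec // negbK.
  have k1 : forall z j, c z = Some j -> c1 z = Some j by move=> z j cz; apply: keep.
  have G : forall P Q, sur e c alpha P -> sur e c alpha Q -> P != Q -> e P Q -> e P v ->
      v != P -> v != Q -> k != alpha -> bob_wins e c1.
    move=> P Q [cP [[uP [ePu cuP]] _]] [cQ [_ HQ]] PQ ePQ ePv vP vQ ka.
    have [j3 [j3a j3k]] := third alpha k.
    apply: (block2 (p:=P) (q:=Q) (j1:=alpha) (j2:=k) (j3:=j3)) => //.
    - by rewrite /c1 recolorE eq_sym (negbTE vP).
    - by rewrite /c1 recolorE eq_sym (negbTE vQ).
    - by exists uP; split => //; apply: k1.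
    - by exists v; split => //; rewrite /c1 recolorE eqxx.
    - by rewrite eq_sym.
    - by rewrite eq_sym.
    - by rewrite eq_sym.
    - apply: avail_rec; first exact: avail_base HQ j3a.
      by move=> _; rewrite eq_sym.
  case: (boolP (v \in [:: a; b; x; d])) => vin.
    have ka : k != alpha.
      have [_ [[u [evu cu]] _]] := P4i v vin.
      by apply/eqP => ka; apply: (avk u evu); rewrite cu ka.
    move: vin; rewrite !inE => /or4P [] /eqP vE; subst v.
    - by apply: (G b x) => //; try solve_neq; rewrite esym.
    - by apply: (G x d) => //; try solve_neq; rewrite esym.
    - by apply: (G b a) => //; try solve_neq; rewrite esym.
    - by apply: (G x b) => //; try solve_neq; rewrite esym.
  have vne : forall z, z \in [:: a; b; x; d] -> v != z.
    by move=> z zin; apply: contraNneq vin => ->.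
  case: (classic (k != alpha /\ exists P, P \in [:: a; b; x; d] /\ e P v)) =>
      [[ka [P [Pin ePv]]]|h].
    have vP := vne P Pin.
    move: Pin vP; rewrite !inE => /or4P [] /eqP PE vP; subst P.
    - apply: (G a b) => //; solve [rewrite esym // | solve_neq | apply: vne; by rewrite !inE eqxx /= ?orbT].
    - apply: (G b a) => //; solve [rewrite esym // | solve_neq | apply: vne; by rewrite !inE eqxx /= ?orbT].
    - apply: (G x b) => //; solve [rewrite esym // | solve_neq | apply: vne; by rewrite !inE eqxx /= ?orbT].
    - apply: (G d x) => //; solve [rewrite esym // | solve_neq | apply: vne; by rewrite !inE eqxx /= ?orbT].
  apply: (IH c1 a b x d alpha); first exact: mes_rec.
  split => // z zin; apply: sur_rec; [exact: P4i | exact: vne | | done].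
  case: (k =P alpha) => [->|ka]; [by left | right] => ezv.
  by apply: h; split; [apply/eqP | exists z].
have [w [cw win]] := extra_unc atc (conj (And4 U eab ebx exd) HS).
have wne : forall z, z \in [:: a; b; x; d] -> w != z.
  by move=> z zin; apply: contraNneq win => ->.
case: (classic (exists w' k, legal e c w' k /\ w' \notin [:: a; b; x; d] /\
    (k = alpha \/ forall P, P \in [:: a; b; x; d] -> ~ e P w'))) =>
    [[w' [k [[cw' avk] [w'in H]]]]|noSafe].
  apply: (@bw_bob _ _ _ w' k) => //.
  apply: (IH _ a b x d alpha); first exact: mes_rec.
  split => // z zin; apply: sur_rec; [exact: P4i | by apply: contraNneq w'in => -> | | done].
  by case: H => [H|H]; [left | right; apply: H].
have [k0 avk0] : exists k0, available e c w k0.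
  apply: NNPP => H; apply: nbl; exists w; split => // k avk; apply: H; by exists k.
have naw : ~ available e c w alpha.
  by move=> avw; apply: noSafe; exists w, alpha; split; [split | split; [| left]].
have [P [Pin ePw]] : exists P, P \in [:: a; b; x; d] /\ e P w.
  apply: NNPP => H; apply: noSafe; exists w, k0; split => //; split => //; right.
  by move=> P Pin ePw; apply: H; exists P.
have [ua [ewua cua]] := unavail naw.
case: (classic (exists j, j != alpha /\ ~ available e c w j)) => [[j [ja naj]]|allav].
  have [ub [ewub cub]] := unavail naj.
  have [j3 [j3a j3j]] := third alpha j.
  have [cP [_ HP]] := P4i P Pin.
  apply: (block2 (p:=w) (q:=P) (j1:=alpha) (j2:=j) (j3:=j3)) => //.
  - exact: wne.
  - by rewrite esym.
  - by exists ua.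
  - by exists ub.
  - by rewrite eq_sym.
  - by rewrite eq_sym.
  - by rewrite eq_sym.
  - exact: avail_base HP j3a.
have Hw : forall u beta, e w u -> c u = Some beta -> beta = alpha.
  move=> u beta ewu cu; apply: NNPP => ba; apply: allav; exists beta.
  by split; [apply/eqP | move=> avb; exact: (avb u ewu cu)].
have wa : w != a by apply: wne; rewrite !inE eqxx.
have wb : w != b by apply: wne; rewrite !inE eqxx /= ?orbT.
have wx : w != x by apply: wne; rewrite !inE eqxx /= ?orbT.
have wd : w != d by apply: wne; rewrite !inE eqxx /= ?orbT.
have neqE : forall u v, e u v -> u != v by move=> u v euv; apply: contraTneq euv => ->; rewrite eirr.
move: Pin; rewrite !inE => /or4P [] /eqP PE; subst P.
- apply: (endpoint esym (w:=w) (a:=a) (b:=b) (x:=x) (d:=d) (alpha:=alpha)) => //.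
  + by solve_neq.
  + by rewrite esym.
  + move=> ead; apply: (acyc (s:=[:: a; b; x; d])) => //.
    by solve_cyc.
  + move=> ewd; apply: (acyc (s:=[:: w; a; b; x; d])) => //.
      by solve_neq.
    by solve_cyc.
  + move=> ewx; apply: (acyc (s:=[:: w; a; b; x])) => //.
      by solve_neq.
    by solve_cyc.
  + move=> v va vb vx evw evd; apply: (acyc (s:=[:: v; w; a; b; x; d])) => //.
      have := neqE _ _ evw; have := neqE _ _ evd; move=> ? ?; by solve_neq.
    by solve_cyc.
- apply: (interior esym eirr (w:=w) (q1:=a) (p:=b) (q2:=x) (f:=d) (alpha:=alpha)) => //.
  + by solve_neq.
  + by rewrite esym.
  + move=> eax; apply: (acyc (s:=[:: a; b; x])) => //; first by solve_neq.
    by solve_cyc.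
  + move=> ewd; apply: (acyc (s:=[:: w; b; x; d])) => //.
      by solve_neq.
    by solve_cyc.
  + move=> v vb eva evx; apply: (acyc (s:=[:: v; a; b; x])) => //.
      have := neqE _ _ eva; have := neqE _ _ evx; move=> ? ?; by solve_neq.
    by solve_cyc.
- apply: (interior esym eirr (w:=w) (q1:=d) (p:=x) (q2:=b) (f:=a) (alpha:=alpha)) => //.
  + by solve_neq.
  + by rewrite esym.
  + by rewrite esym.
  + by rewrite esym.
  + by rewrite esym.
  + move=> edb; apply: (acyc (s:=[:: b; x; d])) => //; first by solve_neq.
    by solve_cyc.
  + move=> ewa; apply: (acyc (s:=[:: w; x; b; a])) => //.
      by solve_neq.
    by solve_cyc.
  + move=> v vx evd evb; apply: (acyc (s:=[:: v; d; x; b])) => //.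
      have := neqE _ _ evd; have := neqE _ _ evb; move=> ? ?; by solve_neq.
    by solve_cyc.
- apply: (endpoint esym (w:=w) (a:=d) (b:=x) (x:=b) (d:=a) (alpha:=alpha)) => //.
  + by solve_neq.
  + by rewrite esym.
  + by rewrite esym.
  + by rewrite esym.
  + by rewrite esym.
  + move=> eda; apply: (acyc (s:=[:: a; b; x; d])) => //.
    by solve_cyc.
  + move=> ewa; apply: (acyc (s:=[:: w; a; b; x; d])) => //.
      by solve_neq.
    by solve_cyc.
  + move=> ewb; apply: (acyc (s:=[:: w; b; x; d])) => //.
      by solve_neq.
    by solve_cyc.
  + move=> v vd vx vb evw eva; apply: (acyc (s:=[:: v; w; d; x; b; a])) => //.
      have := neqE _ _ evw; have := neqE _ _ eva; move=> ? ?; by solve_neq.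
    by solve_cyc.
Qed.
End Main.

Theorem lemma8p2 (T : finType) (e : rel T) (c : pcol T) :
  is_tree e -> ~~ odd #|T| ->
  reachable e c -> has_surrounded_P4 e c ->
  bob_wins e c.
Proof.
move=> [[esym eirr] _ conn ecard] teven _ [a [b [x [d [alpha H]]]]].
have acyc := no_cycle esym conn ecard a.
exact: (main esym eirr acyc teven (n := mes c) (leqnn _) H).
Qed.
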